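(* Let $P$ be a finite geometric lattice of rank $n$ with a fixed atom ordering, $S=\{s_1<\dots<s_k\}\subseteq\{1,\dots,n-1\}$, and let $F$ be a standard filling of $\mathrm{Rib}(s_1,s_2-s_1,\dots,n-s_k)$ whose reading word is an $\mathrm{NBC}^+$ basis of $P$. Then the summands $\mathrm{sgn}(\sigma)\,\bar f_{chain}(\{\sigma F\})$, $\sigma\in\mathrm{Col}_F$, appearing in $\bar f_{chain}(v_F)$ are distinct maximal chains of $P^S$; that is, $\bar f_{chain}(\{\sigma F\})\ne\bar f_{chain}(\{\sigma' F\})$ for distinct $\sigma,\sigma'\in\mathrm{Col}_F$.
   Context: $A(x)$ is the set of atoms below $x$. NBC independent set: atoms $\{b_1,\dots,b_l\}$ whose join has rank $l$ and such that every atom outside the set below the join is later in the order than some $b_j$. $\mathrm{NBC}^+$ basis: ordered NBC independent set $(b_1,\dots,b_n)$, $n=\mathrm{rk}(P)$, with $b_j=\min(A(b_1\vee\dots\vee b_j)\setminus A(b_1\vee\dots\vee b_{j-1}))$. $\mathrm{Rib}(r_1,\dots,r_p)$: ribbon with rows of lengths $r_1,\dots,r_p$ bottom to top, each row starting directly above the last box of the row below; reading word: left to right, bottom row to top; standard: entries increase in atom order along rows left to right and down columns top to bottom. $\mathrm{Col}_F$: permutations of the entries preserving each column. Tabloid $\{F\}$: $F$ modulo permuting entries within rows; $v_F=\sum_{\sigma\in\mathrm{Col}_F}\mathrm{sgn}(\sigma)\{\sigma F\}$. $P^S$: elements with rank in $S$. For reading word $(F_1,\dots,F_n)$, $\bar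 f_{chain}(\{F\})$ is the chain $F_1\vee\dots\vee F_{s_1}<\dots<F_1\vee\dots\vee F_{s_k}$ in $P^S$, extended linearly. *)

(* Defs.v *)
From HB Require Import structures.
From mathcomp Require Import all_boot all_order all_fingroup.
Set Implicit Arguments. Unset Strict Implicit. Unset Printing Implicit Defensive.
Import Order.TTheory.
Local Open Scope order_scope.

Section Lattice.
Context {d : Order.disp_t} {P : finTBLatticeType d}.

Definition covers (x y : P) : bool :=
  (x < y) && [forall z : P, ~~ ((x < z) && (z < y))].

Definition atom (a : P) : bool := covers \bot a.

(* rk is the rank function of P (exists iff P is graded; then it is unique) *)
Definition is_rank_fun (rk : P -> nat) : Prop :=
  rk \bot = 0%N /\ (forall x y : P, covers x y -> rk y = (rk x).+1).

Definition geometric (rk : P -> nat) : Prop :=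
  [/\ is_rank_fun rk,
      (forall x y : P, (rk (x `|` y) + rk (x `&` y) <= rk x + rk y)%N) &
      (forall x : P, x = \join_(a : P | atom a && (a <= x)) a)].

Definition atoms_below (x : P) : {set P} := [set a : P | atom a && (a <= x)].

(* the fixed atom ordering is given by an injective (on atoms) w : P -> nat;
   atom a is earlier than atom b iff w a < w b *)

Definition NBC_indep (rk : P -> nat) (w : P -> nat) (B : {set P}) : Prop :=
  let J := \join_(b in B) b in
  [/\ {subset B <= atom},
      rk J = #|B| &
      forall a : P, a \in atoms_below J -> a \notin B ->
        exists2 b, b \in B & (w b < w a)%N].

Definition NBCplus_basis (rk : P -> nat) (w : P -> nat) (n : nat)
    (b : 'I_n -> P) : Prop :=
  [/\ rk \top = n,
      injective b,
      NBC_indep rk w [set b i | i : 'I_n] &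
      forall j : 'I_n,
        let D := atoms_below (\join_(i < n | (i <= j)%N) b i)
                   :\: atoms_below (\join_(i < n | (i < j)%N) b i) in
        b j \in D /\ (forall a, a \in D -> (w (b j) <= w a)%N)].

(* Ribbon Rib(s_1, s_2 - s_1, ..., n - s_k), cells numbered 0..n-1 in reading
   order (left to right, bottom row to top).  Cell i lies in row
   rib_row S i = #{s in S | s <= i} (rows numbered from 0, bottom to top),
   and, since row j+1 starts directly above the last box of row j, in column
   rib_col S i = (start column of its row) + (offset in row) = i - rib_row S i. *)
Definition rib_row (S : seq nat) (i : nat) : nat := count (fun s => s <= i)%N S.
Definition rib_col (S : seq nat) (i : nat) : nat := (i - rib_row S i)%N.

Definition standard_filling (w : P -> nat) (S : seq nat) (n : nat)
    (F : 'I_n -> P) : Prop :=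
  forall i j : 'I_n, (i < j)%N ->
    (rib_row S i = rib_row S j -> (w (F i) < w (F j))%N) /\
    (rib_col S i = rib_col S j -> (w (F j) < w (F i))%N).

Definition ColF (S : seq nat) (n : nat) : {set {perm 'I_n}} :=
  [set s : {perm 'I_n} | [forall i : 'I_n, rib_col S (s i) == rib_col S i]].

Definition act_filling n (s : {perm 'I_n}) (F : 'I_n -> P) : 'I_n -> P :=
  fun i => F (s i).

Definition fchain (S : seq nat) n (G : 'I_n -> P) : seq P :=
  [seq \join_(i < n | (i < s)%N) G i | s <- S].

Definition maximal_chain_PS (rk : P -> nat) (S : seq nat) (c : seq P) : Prop :=
  [/\ size c = size S,
      forall j, (j < size S)%N -> rk (nth \bot c j) = nth 0%N S j &
      sorted (fun x y => x < y) c].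

End Lattice.

(* Main.v *)
Require Import Defs.
From mathcomp Require Import all_boot all_order all_fingroup.
Import Order.TTheory.

Lemma cardlt n s : (s <= n)%N -> #|[set i : 'I_n | (i < s)%N]| = s.
Proof.
move=> hs.
have -> : [set i : 'I_n | (i < s)%N] = [set widen_ord hs i | i in 'I_s].
  apply/setP=> i; rewrite inE; apply/idP/imsetP => [lt|[j _ ->]] //=.
  by exists (Ordinal lt) => //; apply: val_inj.
by rewrite card_imset ?card_ord // => x y /(congr1 val) /= xy; exact: val_inj.
Qed.

Lemma row_le (S : seq nat) c : sorted ltn S -> all (fun s => (0 < s)%N) S ->
  (rib_row S c <= c)%N.
Proof.
move=> so pos; rewrite /rib_row -size_filter.
have -> : c = size (iota 1 c) by rewrite size_iota.
apply: uniq_leq_size.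
  by apply: filter_uniq; apply: (sorted_uniq ltn_trans ltnn).
move=> x; rewrite mem_filter => /andP [xc xS].
rewrite mem_iota; move/allP: pos => /(_ x xS) x0.
by rewrite size_iota in xc; rewrite x0 /= ?add1n ltnS.
Qed.

Theorem proposition5p35 (d : Order.disp_t) (P : finTBLatticeType d)
  (rk : P -> nat) (w : P -> nat) (n : nat) (S : seq nat) (F : 'I_n -> P) :
  geometric rk ->
  {in atom &, injective w} ->
  rk Order.top = n ->
  sorted ltn S ->
  all (fun s => (0 < s < n)%N) S ->
  standard_filling w S F ->
  NBCplus_basis rk w F ->
  (forall s : {perm 'I_n}, s \in ColF S n ->
      maximal_chain_PS rk S (fchain S (act_filling s F))) /\
  {in ColF S n &, injective (fun s : {perm 'I_n} => fchain S (act_filling s F))}.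
Proof.
move=> [[rk0 rkS] semi _] _ _ so allS _ [_ Finj [Hatom Hrk _] _].
pose J (A : {set 'I_n}) := (\join_(i in A) F i)%O.
have atomF i : rk (F i) = 1%N.
  have : atom (F i) by apply: Hatom; apply: imset_f.
  by move/rkS; rewrite rk0.
have sub x y : (rk (x `|` y)%O <= rk x + rk y)%N.
  exact: leq_trans (leq_addr _ _) (semi x y).
have upper A : (rk (J A) <= #|A|)%N.
  rewrite /J -big_enum cardE; elim: (enum A) => [|a r IH].
    by rewrite big_nil rk0.
  rewrite big_cons /=; apply: leq_trans (sub _ _) _.
  by rewrite atomF add1n ltnS.
have total : rk (J setT) = n.
  have : rk (\join_(b in [set F i | i : 'I_n]) b)%O = n.
    by move: Hrk => /= ->; rewrite card_imset // card_ord.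
  rewrite big_imset /=; last by move=> x y _ _; apply: Finj.
  move=> e; rewrite -[RHS]e; apply: congr1; apply: eq_bigl => i.
  by rewrite inE.
have exact A : rk (J A) = #|A|.
  apply/eqP; rewrite eqn_leq upper /=.
  have e : J setT = (J A `|` J (~:A))%O by rewrite /J -joins_setU setUCr.
  have cn : (#|A| + #|~:A| = n)%N by rewrite cardsC card_ord.
  have h : (#|A| + #|~:A| <= rk (J A) + rk (J (~:A)))%N.
    by apply: leq_trans (sub (J A) (J (~:A))); rewrite -e total cn.
  by rewrite -(leq_add2r #|~:A|); apply: leq_trans h _; rewrite leq_add2l upper.
have notle (A : {set 'I_n}) k : k \notin A -> ~~ (F k <= J A)%O.
  move=> kA; apply/negP => le.
  have : J (k |: A) = J A by rewrite /J joins_setU big_set1 join_r.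
  move/(congr1 rk); rewrite !exact cardsU1 kA.
  by move/eqP; rewrite -{2}[#|A|]add0n eqn_add2r.
have key (A : {set 'I_n}) k : (F k <= J A)%O = (k \in A).
  case: (boolP (k \in A)) => kA; first exact: (joins_sup F (P := mem A) kA).
  exact/negbTE/notle.
have chainE (s : {perm 'I_n}) x :
    (\join_(i < n | (i < x)%N) act_filling s F i)%O = J [set k | (s^-1 k < x)%N]%g.
  symmetry; rewrite /J (reindex_inj (@perm_inj _ s)) /=; apply: eq_bigl => i.
  by rewrite inE permK.
have cardA (s : {perm 'I_n}) x : (x <= n)%N -> #|[set k | (s^-1 k < x)%N]%g| = x.
  move=> xn; have -> : [set k | (s^-1 k < x)%N]%g = s @: [set i : 'I_n | (i < x)%N].
    apply/setP => k; rewrite inE; apply/idP/imsetP => [h | [i hi ->]].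
      by exists (s^-1 k)%g; rewrite ?inE ?permKV.
    by rewrite inE in hi; rewrite permK.
  by rewrite card_imset ?cardlt //; apply: perm_inj.
have Sn x : x \in S -> (x <= n)%N.
  by move=> /(allP allS) /andP [_ /ltnW].
split.
  move=> s _; split.
  - by rewrite size_map.
  - move=> j jS; rewrite (nth_map 0%N) // chainE exact cardA //.
    by apply: Sn; apply: mem_nth.
  - rewrite /fchain; apply: (homo_sorted_in (P := mem S)) so; last exact: allss.
    move=> x y xS yS xy; rewrite !chainE lt_def; apply/andP; split.
      apply/eqP => /(congr1 rk); rewrite !exact !cardA ?Sn // => yx.
      by have : (x < y)%N := xy; rewrite yx ltnn.
    apply: le_joins; apply/subsetP => k; rewrite !inE => h.
    exact: ltn_trans h xy.
move=> s t sC tC /= e.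
have e2 := iffRL (eq_in_map _ _ _) e.
have memA k x : x \in S -> ((s^-1)%g k < x)%N = ((t^-1)%g k < x)%N.
  move=> xS; have := e2 x xS; rewrite /= !chainE => eJ.
  by have := key [set k0 | ((s^-1)%g k0 < x)%N] k; rewrite eJ key !inE.
have rowE k : rib_row S (s^-1 k)%g = rib_row S (t^-1 k)%g.
  by rewrite /rib_row; apply: eq_in_count => x xS /=; rewrite leqNgt memA // -leqNgt.
have colE (u : {perm 'I_n}) k : u \in ColF S n -> rib_col S (u^-1 k)%g = rib_col S k.
  by rewrite inE => /forallP /(_ (u^-1 k)%g) /eqP; rewrite permKV.
have pos : all (fun s => (0 < s)%N) S.
  by apply/allP => x /(allP allS) /andP [].
have cr (u : {perm 'I_n}) k : ((u^-1 k)%g : nat) = (rib_col S (u^-1 k)%g + rib_row S (u^-1 k)%g)%N.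
  by rewrite /rib_col subnK // row_le.
have inv k : (s^-1 k)%g = (t^-1 k)%g.
  by apply: val_inj; rewrite /= cr [RHS]cr rowE !colE.
apply/permP => x; have := inv (s x); rewrite permK => h.
by rewrite [in RHS]h permKV.
Qed.
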